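(* For every object $V$ of $\mathcal{E}_q^{deg}$ there is an isomorphism in $\mathcal{F}_{iso}$ $$Q_V\cong\bigoplus_{A\in\mathcal{S}_V}iso_A,$$ where $\mathcal{S}_V$ is the set of subobjects $\alpha:A\hookrightarrow V$ of $V$ in $\mathcal{E}_q^{deg}$ (equivalently, the linear subspaces $A$ of $V$ with the restricted form, $V$ itself included).
   Context: $\mathcal{E}$: all $\mathbb{F}_2$-vector spaces; $(-)^*$ linear duality. $\mathcal{E}_q^{deg}$: objects finite-dimensional quadratic spaces over $\mathbb{F}_2$ (possibly degenerate), morphisms injective linear maps preserving quadratic forms. $\mathrm{Sp}(\mathcal{E}_q^{deg})$: same objects, morphisms spans $[V\leftarrow D\rightarrow W]$ up to iso of $D$, composed by pullback. $\mathcal{F}_{iso}=\mathrm{Func}(\mathrm{Sp}(\mathcal{E}_q^{deg}),\mathcal{E})$. $Q_V=\mathbb{F}_2[\mathrm{Hom}_{\mathrm{Sp}(\mathcal{E}_q^{deg})}(V,-)]$. Duality: $DF=(-)^*\circ F\circ tr^{op}$ with $tr[V\leftarrow X\rightarrow W]=[W\leftarrow X\rightarrow V]$. $a_V:Q_V\to DQ_V$ is the morphism corresponding by Yoneda to the linear form $(\mathrm{Id}_V)^*\in\mathbb{F}_2[\mathrm{End}(V)]^*$ taking value $1$ on $\mathrm{Id}_V$ and $0$ on all other basis elements; the isotropic functor $iso_V$ is the image of $a_V$. *)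

(* Defs.v *)
From HB Require Import structures.
From mathcomp Require Import all_boot all_order all_algebra.
Set Implicit Arguments. Unset Strict Implicit. Unset Printing Implicit Defensive.
Import GRing.Theory.
Local Open Scope ring_scope.



(* A finite set of row vectors which is an F_2-linear subspace
   (over F_2, closure under 0 and + is closure under linear combinations). *)
Definition is_subspace n (U : {set 'rV['F_2]_n}) : bool :=
  (0 \in U) && [forall x in U, forall y in U, x + y \in U].

Definition polar n (q : 'rV['F_2]_n -> 'F_2) (x y : 'rV['F_2]_n) : 'F_2 :=
  q (x + y) - q x - q y.

(* q is a quadratic form on U: q(0) = 0 (i.e. q(c x) = c^2 q(x) for c in F_2)
   and its polar form is bilinear on U (it is symmetric by definition,
   and additivity is F_2-linearity). *)
Definition is_quadratic n (U : {set 'rV['F_2]_n}) (q : 'rV['F_2]_n -> 'F_2) : bool :=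
  (q 0 == 0) && [forall x in U, forall y in U, forall z in U,
     polar q (x + y) z == polar q x z + polar q y z].

(* An object of E_q^deg: a finite-dimensional F_2-vector space (realised as a
   subspace U of some F_2^n) with a (possibly degenerate) quadratic form. *)
Record qobj := QObj {
  qdim : nat;
  qspace : {set 'rV['F_2]_qdim};
  qform : 'rV['F_2]_qdim -> 'F_2;
  qspaceP : is_subspace qspace;
  qformP : is_quadratic qspace qform }.

Definition rel_ty (V W : qobj) := {set ('rV['F_2]_(qdim V) * 'rV['F_2]_(qdim W))}.

(* A span [V <- D -> W] (legs injective, form preserving) up to isomorphism of D
   is the same thing as the image of D in V x W: a subspace S of V x W on which
   both projections are injective and q_V(s.1) = q_W(s.2). *)
Definition is_span (V W : qobj) (S : rel_ty V W) : bool :=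
  [&& S \subset setX (qspace V) (qspace W),
      (0, 0) \in S,
      [forall x in S, forall y in S, (x.1 + y.1, x.2 + y.2) \in S],
      [forall x in S, forall y in S, (x.1 == y.1) ==> (x == y)],
      [forall x in S, forall y in S, (x.2 == y.2) ==> (x == y)] &
      [forall x in S, @qform V x.1 == @qform W x.2]].

Definition sphom (V W : qobj) := {S : rel_ty V W | is_span S}.

(* Composition by pullback = composition of relations: (F o G) for G : U -> V,
   F : V -> W. *)
Definition relcomp (U V W : qobj) (G : rel_ty U V) (F : rel_ty V W) : rel_ty U W :=
  [set x | [exists w, ((x.1, w) \in G) && ((w, x.2) \in F)]].

Definition reltr (V W : qobj) (F : rel_ty V W) : rel_ty W V :=
  [set (x.2, x.1) | x in F].

Definition relid (V : qobj) : rel_ty V V := [set (x, x) | x in qspace V].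

(* Q_V(W) = F_2[Hom(V,W)], as functions Hom(V,W) -> F_2 (Hom(V,W) is finite). *)
Notation Qmod V W := {ffun sphom V W -> 'F_2}.

(* Q_V(f) for f : W -> W' : basis element g |-> f o g, extended linearly. *)
Definition Qmap (V W W' : qobj) (F : rel_ty W W') (x : Qmod V W) : Qmod V W' :=
  [ffun h : sphom V W' => \sum_(g : sphom V W | relcomp (val g) F == val h) x g].

Definition delta (V W : qobj) (h : sphom V W) : Qmod V W := [ffun g => (g == h)%:R].

(* DQ_V(W) = Q_V(W)^*, identified with functions Hom(V,W) -> F_2 via the
   dual basis; DQ_V(f) = (Q_V(tr f))^*. *)
Definition DQmap (V W W' : qobj) (F : rel_ty W W') (l : Qmod V W) : Qmod V W' :=
  [ffun h : sphom V W' => \sum_(g : sphom V W) Qmap (reltr F) (delta h) g * l g].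

Definition fscale (T : finType) (c : 'F_2) (f : {ffun T -> 'F_2}) : {ffun T -> 'F_2} :=
  [ffun t => c * f t].

Definition idstar (V : qobj) : Qmod V V := [ffun h : sphom V V => (val h == relid V)%:R].

(* a_V : Q_V -> DQ_V, the Yoneda morphism of (Id_V)^*: [g] |-> DQ_V(g)((Id_V)^* ). *)
Definition amap (V W : qobj) (x : Qmod V W) : Qmod V W :=
  \sum_(g : sphom V W) fscale (x g) (DQmap (val g) (idstar V)).

Definition in_iso (V W : qobj) (l : Qmod V W) : Prop := exists x : Qmod V W, amap x = l.

Definition subobj (V : qobj) :=
  {A : {set 'rV['F_2]_(qdim V)} | is_subspace A && (A \subset qspace V)}.

Lemma is_quadratic_sub n (U A : {set 'rV['F_2]_n}) q :
  A \subset U -> is_quadratic U q -> is_quadratic A q.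
Proof.
move=> /subsetP sAU /andP[q0 /forallP H]; rewrite /is_quadratic q0 /=.
apply/forallP=> x; apply/implyP=> xA; apply/forallP=> y; apply/implyP=> yA.
apply/forallP=> z; apply/implyP=> zA.
have := H x; rewrite (sAU _ xA) /= => /forallP /(_ y); rewrite (sAU _ yA) /=.
by move=> /forallP /(_ z); rewrite (sAU _ zA).
Qed.

Lemma subobj_subspace V (A : subobj V) : is_subspace (val A).
Proof. by case/andP: (valP A). Qed.

Lemma subobj_quad V (A : subobj V) : is_quadratic (val A) (@qform V).
Proof. by case/andP: (valP A) => _ sA; exact: is_quadratic_sub sA (@qformP V). Qed.

Definition sobj (V : qobj) (A : subobj V) : qobj :=
  QObj (subobj_subspace A) (subobj_quad A).

(* Main.v *)
Require Import Defs.
From HB Require Import structures.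
From mathcomp Require Import all_boot all_order all_algebra.
Import GRing.Theory.
Local Open Scope ring_scope.

Lemma tri_inj (T : finType) (R : rel T) (m : T -> nat)
  (Rrefl : forall a, R a a)
  (Req : forall a b, R a b -> (m b <= m a)%N -> a = b)
  (z : T -> 'F_2) :
  (forall k, \sum_(g | R k g) z g = 0) -> forall g, z g = 0.
Proof.
move=> H g; apply/eqP; apply: contraT => nz.
case: (@arg_maxnP T g (fun i => z i != 0) m nz) => g1 nz1 max1.
have := H g1; rewrite (bigD1 g1) ?Rrefl //= big1 ?addr0.
  by move=> e; move: nz1; rewrite e eqxx.
move=> g' /andP[Rg ne]; apply/eqP; apply: contraT => nz'.
have := max1 g' nz'; rewrite /= => le.
by move: ne; rewrite (Req _ _ Rg le) eqxx.
Qed.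

Lemma tri_surj (T : finType) (R : rel T) (m : T -> nat)
  (Rrefl : forall a, R a a)
  (Rm : forall a b, R a b -> (m a <= m b)%N)
  (Req : forall a b, R a b -> (m b <= m a)%N -> a = b)
  (t : T -> 'F_2) :
  exists x : T -> 'F_2, forall k, \sum_(g | R k g) x g = t k.
Proof.
pose P n := exists x : T -> 'F_2, forall k, (n <= m k)%N -> \sum_(g | R k g) x g = t k.
have step n : P n.+1 -> P n.
  case=> x Hx.
  exists (fun g => x g + (if m g == n then t g - \sum_(g' | R g g') x g' else 0)).
  move=> k lenk; rewrite big_split /=.
  have [ek|nek] := eqVneq (m k) n.
    rewrite [X in _ + X](bigD1 k) ?Rrefl //= ek eqxx.
    rewrite [X in _ + (_ + X)]big1 ?addr0.
      by rewrite addrCA subrr addr0.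
    move=> g /andP[Rkg ngk]; case: eqP => // mg.
    by move: ngk; rewrite (Req _ _ Rkg) ?eqxx // mg ek.
  have lt : (n.+1 <= m k)%N by rewrite ltn_neqAle eq_sym nek lenk.
  rewrite Hx // big1 ?addr0 // => g Rkg; case: eqP => // mg.
  by have := Rm _ _ Rkg; rewrite mg leqNgt lt.
pose N := (\max_(k : T) m k).+1.
have base : P N by exists (fun _ => 0) => k; rewrite /N ltnNge leq_bigmax.
have all_d : forall d, P (N - d)%N.
  elim=> [|d IH]; first by rewrite subn0.
  case: (ltnP d N) => hd.
    by apply: step; rewrite subnSK.
  have e1 : (N - d.+1 = 0)%N by apply/eqP; rewrite subn_eq0 ltnW.
  have e2 : (N - d = 0)%N by apply/eqP; rewrite subn_eq0.
  by rewrite e1 -e2.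
by case: (all_d N); rewrite subnn => x Hx; exists x => k; exact: Hx.
Qed.
Definition rcomp (T1 T2 T3 : finType) (G : {set T1 * T2}) (F : {set T2 * T3}) : {set T1 * T3} :=
  [set x | [exists w, ((x.1, w) \in G) && ((w, x.2) \in F)]].
Definition rtr (T1 T2 : finType) (F : {set T1 * T2}) : {set T2 * T1} := [set (x.2, x.1) | x in F].
Definition domset (T1 T2 : finType) (S : {set T1 * T2}) : {set T1} := [set x.1 | x in S].

Arguments rcomp {T1 T2 T3}.
Arguments rtr {T1 T2}.
Arguments domset {T1 T2}.

Lemma in_rcomp (T1 T2 T3 : finType) (G : {set T1 * T2}) (F : {set T2 * T3}) a b :
  ((a, b) \in rcomp G F) = [exists w, ((a, w) \in G) && ((w, b) \in F)].
Proof. by rewrite inE. Qed.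

Lemma in_rtr (T1 T2 : finType) (F : {set T1 * T2}) a b : ((a, b) \in rtr F) = ((b, a) \in F).
Proof.
apply/imsetP/idP => [[[x y] xF [-> ->]] //|h]; by exists (b, a).
Qed.

Lemma in_domset (T1 T2 : finType) (S : {set T1 * T2}) a :
  (a \in domset S) = [exists b, (a, b) \in S].
Proof.
apply/imsetP/existsP => [[[x y] xS ->]|[b h]]; first by exists y.
by exists (a, b).
Qed.

Lemma in_diag (T : finType) (U : {set T}) a b :
  ((a, b) \in [set (x, x) | x in U]) = (a == b) && (a \in U).
Proof.
apply/imsetP/andP => [[x xU [-> ->]]|[/eqP -> bU]]; first by rewrite eqxx.
by exists b.
Qed.

Lemma comp_tr_diag (T1 T2 : finType) (H G : {set T1 * T2}) (U : {set T1}) :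
  (forall a b, (a, b) \in H -> a \in U) -> (forall a b, (a, b) \in G -> a \in U) ->
  (forall a b c, (a, b) \in H -> (a, c) \in H -> b = c) ->
  (forall a b c, (a, b) \in G -> (a, c) \in G -> b = c) ->
  (forall a b c, (a, c) \in G -> (b, c) \in G -> a = b) ->
  (rcomp H (rtr G) == [set (x, x) | x in U]) = (H == G) && (domset G == U).
Proof.
move=> HU GU Hi1 Gi1 Gi2.
apply/idP/idP => [/eqP E|/andP[/eqP EHG /eqP ED]].
  have key a : a \in U -> exists w, ((a, w) \in H) && ((a, w) \in G).
    move=> aU; have : (a, a) \in rcomp H (rtr G) by rewrite E in_diag eqxx aU.
    by rewrite in_rcomp => /existsP[w /andP[h1]]; rewrite in_rtr => h2; exists w; rewrite h1 h2.
  apply/andP; split.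
    apply/eqP/setP => -[a b]; apply/idP/idP => h.
      have [w /andP[h1 h2]] := key a (HU _ _ h).
      by rewrite (Hi1 _ _ _ h h1).
    have [w /andP[h1 h2]] := key a (GU _ _ h).
    by rewrite (Gi1 _ _ _ h h2).
  apply/eqP/setP => a; rewrite in_domset; apply/existsP/idP => [[b h]|aU].
    exact: GU h.
  by have [w /andP[_ h2]] := key a aU; exists w.
apply/eqP/setP => -[a b]; rewrite in_rcomp in_diag EHG.
apply/existsP/andP => [[w /andP[h1]]|[/eqP <- aU]].
  rewrite in_rtr => h2; rewrite (Gi2 _ _ _ h1 h2) eqxx; split => //.
  exact: GU h2.
move: aU; rewrite -ED in_domset => /existsP[w h]; exists w.
by rewrite h in_rtr h.
Qed.

Lemma nat_core (T1 T2 T3 : finType) (K : {set T1 * T3}) (F : {set T2 * T3})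
  (G : {set T1 * T2}) (A : {set T1}) :
  (forall a b, (a, b) \in K -> a \in A) ->
  (forall a b c, (a, b) \in K -> (a, c) \in K -> b = c) ->
  (forall a b c, (a, c) \in F -> (b, c) \in F -> a = b) ->
  ((domset K == A) && (K \subset rcomp G F)) =
  ((domset (rcomp K (rtr F)) == A) && (rcomp K (rtr F) \subset G)).
Proof.
move=> hA Ki1 Fi2.
apply/idP/idP => [/andP[/eqP dK /subsetP sK]|/andP[/eqP dC /subsetP sC]].
  have H1 a w : (a, w) \in rcomp K (rtr F) -> (a, w) \in G.
    rewrite in_rcomp => /existsP[w' /andP[kaw']]; rewrite in_rtr => fww'.
    have := sK _ kaw'; rewrite in_rcomp => /existsP[w'' /andP[g1 f1]].
    by rewrite -(Fi2 _ _ _ f1 fww').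
  apply/andP; split; last by apply/subsetP => -[a w]; exact: H1.
  apply/eqP/setP => a; rewrite in_domset; apply/existsP/idP.
    case=> w; rewrite in_rcomp => /existsP[w' /andP[kaw' _]]; exact: hA kaw'.
  rewrite -dK in_domset => /existsP[w' kaw'].
  have := sK _ kaw'; rewrite in_rcomp => /existsP[w /andP[gaw fww']].
  by exists w; rewrite in_rcomp; apply/existsP; exists w'; rewrite kaw' in_rtr fww'.
apply/andP; split.
  apply/eqP/setP => a; rewrite in_domset; apply/existsP/idP => [[b h]|aA].
    exact: hA h.
  move: aA; rewrite -dC in_domset => /existsP[w]; rewrite in_rcomp.
  by case/existsP => w' /andP[h _]; exists w'.
apply/subsetP => -[a w'] h.
have : a \in domset (rcomp K (rtr F)) by rewrite dC (hA _ _ h).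
rewrite in_domset => /existsP[w]; rewrite in_rcomp => /existsP[w'' /andP[h1]].
rewrite in_rtr (Ki1 _ _ _ h1 h) => fw.
rewrite in_rcomp; apply/existsP; exists w; rewrite fw andbT.
by apply: sC; rewrite in_rcomp; apply/existsP; exists w'; rewrite h in_rtr.
Qed.

Lemma spanP (V W : qobj) (S : rel_ty V W) :
  is_span S <->
  [/\ (forall a b, (a, b) \in S -> (a \in qspace V) && (b \in qspace W)),
      (0, 0) \in S,
      (forall a b c d, (a, b) \in S -> (c, d) \in S -> (a + c, b + d) \in S),
      (forall a b c, (a, b) \in S -> (a, c) \in S -> b = c) &
      ((forall a b c, (a, c) \in S -> (b, c) \in S -> a = b) /\
      (forall a b, (a, b) \in S -> @qform V a = @qform W b))].
Proof.
split.
  case/and5P => /subsetP sub z /forall_inP add /forall_inP i1 /andP[/forall_inP i2 /forall_inP q].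
  split => //; try split.
  - by move=> a b /sub; rewrite inE.
  - by move=> a b c d h1 h2; move/forall_inP: (add _ h1) => /(_ _ h2).
  - move=> a b c h1 h2; move/forall_inP: (i1 _ h1) => /(_ _ h2) /=.
    by rewrite eqxx /= => /eqP [].
  - move=> a b c h1 h2; move/forall_inP: (i2 _ h1) => /(_ _ h2) /=.
    by rewrite eqxx /= => /eqP [].
  - by move=> a b /q /eqP.
case=> sub z add i1 [i2 q]; apply/and5P; split => //; try apply/andP; try split.
- by apply/subsetP => -[a b] /sub; rewrite inE.
- apply/forall_inP => -[a b] h1; apply/forall_inP => -[c d] h2; exact: add.
- apply/forall_inP => -[a b] h1; apply/forall_inP => -[c d] h2; apply/implyP => /= /eqP e.
  by rewrite e in h1; rewrite (i1 _ _ _ h1 h2) e.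
- apply/forall_inP => -[a b] h1; apply/forall_inP => -[c d] h2; apply/implyP => /= /eqP e.
  by rewrite e in h1; rewrite (i2 _ _ _ h1 h2) e.
- by apply/forall_inP => -[a b] h; apply/eqP; exact: q.
Qed.

Lemma span_comp (U V W : qobj) (G : rel_ty U V) (F : rel_ty V W) :
  is_span G -> is_span F -> is_span (relcomp G F).
Proof.
case/spanP => Gs Gz Ga Gi1 [Gi2 Gq]; case/spanP => Fs Fz Fa Fi1 [Fi2 Fq].
change (is_span (rcomp G F)).
apply/spanP; split; try split.
- move=> a b; rewrite in_rcomp => /existsP[w /andP[h1 h2]].
  by case/andP: (Gs _ _ h1) => -> _; case/andP: (Fs _ _ h2).
- by rewrite in_rcomp; apply/existsP; exists 0; rewrite Gz Fz.
- move=> a b c d; rewrite !in_rcomp => /existsP[w /andP[h1 h2]] /existsP[w' /andP[h3 h4]].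
  by apply/existsP; exists (w + w'); rewrite (Ga _ _ _ _ h1 h3) (Fa _ _ _ _ h2 h4).
- move=> a b c; rewrite !in_rcomp => /existsP[w /andP[h1 h2]] /existsP[w' /andP[h3 h4]].
  rewrite (Gi1 _ _ _ h1 h3) in h2; exact: Fi1 h2 h4.
- move=> a b c; rewrite !in_rcomp => /existsP[w /andP[h1 h2]] /existsP[w' /andP[h3 h4]].
  rewrite (Fi2 _ _ _ h2 h4) in h1; exact: Gi2 h1 h3.
- move=> a b; rewrite in_rcomp => /existsP[w /andP[h1 h2]].
  by rewrite (Gq _ _ h1) (Fq _ _ h2).
Qed.

Lemma span_tr (V W : qobj) (F : rel_ty V W) : is_span F -> is_span (reltr F).
Proof.
case/spanP => Fs Fz Fa Fi1 [Fi2 Fq].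
change (is_span (rtr F)).
apply/spanP; split; try split.
- by move=> a b; rewrite in_rtr => /Fs /andP[-> ->].
- by rewrite in_rtr.
- by move=> a b c d; rewrite !in_rtr; exact: Fa.
- by move=> a b c; rewrite !in_rtr; exact: Fi2.
- by move=> a b c; rewrite !in_rtr; exact: Fi1.
- by move=> a b; rewrite in_rtr => /Fq ->.
Qed.

Arguments span_comp {U V W G F}.
Arguments span_tr {V W F}.

Definition mksp (U W : qobj) (S : rel_ty U W) (pf : is_span S) : sphom U W :=
  exist (@is_span U W) S pf.
Arguments mksp {U W S}.

Lemma sum_val_eq (U W : qobj) (S : rel_ty U W) (pf : is_span S) (F : sphom U W -> 'F_2) :
  \sum_(g : sphom U W) (S == val g)%:R * F g = F (mksp pf).
Proof.
rewrite (bigD1 (mksp pf)) //= eqxx mul1r big1 ?addr0 // => g ng.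
have : S != val g.
  by apply: contraNneq ng => e; apply/eqP; apply: val_inj; rewrite /= -e.
by move/negbTE => ->; rewrite mul0r.
Qed.

Lemma Qmap_delta (U W W' : qobj) (F : rel_ty W W') (h : sphom U W) (g : sphom U W') :
  Qmap F (delta h) g = (relcomp (val h) F == val g)%:R.
Proof.
rewrite ffunE big_mkcond (bigD1 h) //= ffunE eqxx big1 ?addr0.
  by case: ifP.
by move=> g' ngh; rewrite ffunE (negbTE ngh); case: ifP.
Qed.

Lemma DQmapE (U W W' : qobj) (F : rel_ty W W') (l : Qmod U W) (h : sphom U W')
  (pf : is_span (relcomp (val h) (reltr F))) : DQmap F l h = l (mksp pf).
Proof.
rewrite ffunE; under eq_bigr => g _ do rewrite Qmap_delta.
exact: sum_val_eq.
Qed.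

Arguments DQmapE {U W W' F l h}.

Definition totU (U W : qobj) (h : sphom U W) : bool := domset (val h) == qspace U.
Arguments totU {U W}.

Lemma amapE (U W : qobj) (y : Qmod U W) (h : sphom U W) :
  amap y h = y h * (totU h)%:R.
Proof.
rewrite /amap sum_ffunE.
under eq_bigr => g _ do rewrite ffunE (DQmapE (span_comp (valP h) (span_tr (valP g)))) ffunE /=.
have core g : (relcomp (val h) (reltr (val g)) == relid U) = (val h == val g) && totU g.
  case/spanP: (valP h) => Hs _ _ Hi1 _; case/spanP: (valP g) => Gs _ _ Gi1 [Gi2 _].
  apply: comp_tr_diag => //.
  - by move=> a b /Hs /andP[].
  - by move=> a b /Gs /andP[].
under eq_bigr => g _ do rewrite core.
rewrite (bigD1 h) //= eqxx /= big1 ?addr0 // => g ngh.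
rewrite (_ : (val h == val g) = false) ?mulr0 //; apply/negbTE.
by apply: contra ngh => /eqP e; apply/eqP; apply: val_inj; rewrite -e.
Qed.

Lemma domA_prop (V W : qobj) (g : sphom V W) :
  is_subspace (domset (val g)) && (domset (val g) \subset qspace V).
Proof.
case/spanP: (valP g) => sub z add _ _.
apply/andP; split; [apply/andP; split|].
- by rewrite in_domset; apply/existsP; exists 0.
- apply/forall_inP => a; rewrite in_domset => /existsP[b ab].
  apply/forall_inP => c; rewrite in_domset => /existsP[d cd].
  by rewrite in_domset; apply/existsP; exists (b + d); exact: add.
- by apply/subsetP => a; rewrite in_domset => /existsP[b /sub /andP[]].
Qed.

Definition domA (V W : qobj) (g : sphom V W) : subobj V :=
  exist (fun A => is_subspace A && (A \subset qspace V)) _ (@domA_prop V W g).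
Arguments domA {V W}.

Lemma tosub_span (V W : qobj) (g : sphom V W) : @is_span (sobj (domA g)) W (val g).
Proof.
case/spanP: (valP g) => sub z add i1 [i2 q].
apply/spanP; split => //.
move=> a b h; apply/andP; split.
  by rewrite /= in_domset; apply/existsP; exists b.
by case/andP: (sub _ _ h).
Qed.

Definition tosub (V W : qobj) (g : sphom V W) : sphom (sobj (domA g)) W :=
  exist (@is_span (sobj (domA g)) W) (val g) (@tosub_span V W g).
Arguments tosub {V W}.

Lemma emb_span (V W : qobj) (A : subobj V) (k : sphom (sobj A) W) : @is_span V W (val k).
Proof.
case/spanP: (valP k) => sub z add i1 [i2 q].
case/andP: (valP A) => _ /subsetP sA.
apply/spanP; split => //.
move=> a b /sub /andP[h1 ->]; rewrite andbT; exact: sA.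
Qed.

Definition emb (V W : qobj) (A : subobj V) (k : sphom (sobj A) W) : sphom V W :=
  exist (@is_span V W) (val k) (@emb_span V W A k).
Arguments emb {V W A}.

Definition phi (V : qobj) (A : subobj V) (W : qobj) (x : Qmod V W) : Qmod (sobj A) W :=
  [ffun k : sphom (sobj A) W =>
     (totU k)%:R * \sum_(g : sphom V W | val k \subset val g) x g].

Arguments sum_val_eq {U W S}.

Lemma psi_transport (V W : qobj) (psi : forall A : subobj V, Qmod (sobj A) W)
  (A B : subobj V) (k1 : sphom (sobj A) W) (k2 : sphom (sobj B) W) :
  val A = val B -> val k1 = val k2 -> psi A k1 = psi B k2.
Proof.
move=> eAB; have e : A = B by apply: val_inj.
subst B => ek; have -> // : k1 = k2 by apply: val_inj.
Qed.

Lemma bool_helper (b1 b2 b3 b4 : bool) (y : 'F_2) :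
  (b1 && b2) = (b3 && b4) -> b1%:R * (y * b2%:R) = b3%:R * (if b4 then y else 0).
Proof.
by case: b1; case: b2; case: b3; case: b4 => //= _;
  rewrite ?mul1r ?mulr1 ?mul0r ?mulr0.
Qed.

Theorem theorem4p31 (V : qobj) :
  exists phi : forall (A : subobj V) (W : qobj), Qmod V W -> Qmod (sobj A) W,
    [/\ (* each component is F_2-linear *)
        forall A W (c : 'F_2) (x y : Qmod V W),
          phi A W (fscale c x + y) = fscale c (phi A W x) + phi A W y,
        (* it takes values in iso_A(W) *)
        forall A W (x : Qmod V W), in_iso (phi A W x),
        (* naturality w.r.t. all morphisms of Sp(E_q^deg) *)
        forall A W W' (f : sphom W W') (x : Qmod V W),
          phi A W' (Qmap (val f) x) = DQmap (val f) (phi A W x),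
        (* injective at every W *)
        forall W (x y : Qmod V W), (forall A, phi A W x = phi A W y) -> x = y &
        (* surjective onto (+)_A iso_A(W) at every W *)
        forall W (psi : forall A : subobj V, Qmod (sobj A) W),
          (forall A, in_iso (psi A)) -> exists x : Qmod V W, forall A, phi A W x = psi A].
Proof.
exists (@phi V); split.
- move=> A W c x y; apply/ffunP => k; rewrite !ffunE.
  under eq_bigr => g _ do rewrite !ffunE.
  by rewrite big_split /= -mulr_sumr mulrDr mulrCA.
- move=> A W x; exists (@phi V A W x); apply/ffunP => k.
  by rewrite amapE !ffunE; case: totU; rewrite ?mulr1 ?mulr0 ?mul0r.
- move=> A W W' f x; apply/ffunP => k.
  rewrite (DQmapE (span_comp (valP k) (span_tr (valP f)))) !ffunE.
  have E1 : \sum_(g' : sphom V W' | val k \subset val g') Qmap (val f) x g' =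
      \sum_(g : sphom V W) x g * (val k \subset relcomp (val g) (val f))%:R.
    rewrite big_mkcond.
    transitivity (\sum_(g' : sphom V W') \sum_(g : sphom V W)
        (val k \subset val g')%:R * ((relcomp (val g) (val f) == val g')%:R * x g)).
      apply: eq_bigr => g' _; rewrite ffunE; case: ifP => _.
        rewrite big_mkcond; apply: eq_bigr => g _; rewrite mul1r.
        by case: ifP => _; rewrite ?mul1r ?mul0r.
      by rewrite big1 // => g _; rewrite mul0r.
    rewrite exchange_big; apply: eq_bigr => g _.
    under eq_bigr => g' _ do rewrite mulrCA.
    rewrite (sum_val_eq (span_comp (valP g) (valP f))
               (fun g' : sphom V W' => (val k \subset val g')%:R * x g)) /=.
    by rewrite mulrC.
  rewrite E1 mulr_sumr [in RHS]big_mkcond mulr_sumr; apply: eq_bigr => g _.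
  apply: bool_helper.
  case/spanP: (valP k) => Ks _ _ Ki1 _; case/spanP: (valP f) => _ _ _ _ [Fi2 _].
  apply: nat_core.
  - by move=> a b /Ks /andP[].
  - exact: Ki1.
  - exact: Fi2.
- move=> W x y H; apply/ffunP => g.
  have key (k : sphom V W) : \sum_(g' : sphom V W | val k \subset val g') x g' =
               \sum_(g' : sphom V W | val k \subset val g') y g'.
    move/ffunP: (H (domA k)) => /(_ (tosub k)); rewrite !ffunE /=.
    by rewrite (_ : totU (tosub k) = true) ?mul1r //; apply/eqP.
  apply/eqP; rewrite -subr_eq0; apply/eqP.
  apply: (@tri_inj _ (fun a b : sphom V W => val a \subset val b) (fun g => #|val g|)
            _ _ (fun g => x g - y g)) => [a|a b ab le|k] /=.
  + exact: subxx.
  + by apply: val_inj; apply/eqP; rewrite eqEcard ab le.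
  + by rewrite sumrB key subrr.
- move=> W psi Hpsi.
  have supp A k : ~~ totU k -> psi A k = 0.
    by case: (Hpsi A) => y <-; rewrite amapE => /negbTE ->; rewrite mulr0.
  have Req (a b : sphom V W) : val a \subset val b -> (#|val b| <= #|val a|)%N -> a = b.
    by move=> ab le; apply: val_inj; apply/eqP; rewrite eqEcard ab le.
  have [x Hx] := @tri_surj _ (fun a b : sphom V W => val a \subset val b) (fun g => #|val g|)
     (fun a => subxx _) (fun a b ab => subset_leq_card ab) Req
     (fun g => psi (domA g) (tosub g)).
  exists (finfun x) => A; apply/ffunP => k; rewrite ffunE.
  case tk: (totU k); last by rewrite mul0r supp ?tk.
  rewrite mul1r; under eq_bigr => g _ do rewrite ffunE.
  rewrite (Hx (emb k)) /=.
  apply: psi_transport => //=.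
  by move/eqP: tk.
Qed.
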